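(* Let $S$ be a range set and $\Gamma$ the middle-third Cantor set. The set of all uniformly perfect metrics in $\mathrm{Ult}(\Gamma,S)$ is an $F_\sigma$ subset of $(\mathrm{Ult}(\Gamma,S),\mathcal{UD}_\Gamma^S)$.
   Context: A range set is $S\subseteq[0,\infty)$ with $0\in S$. $\mathrm{Ult}(X,S)$ is the set of all ultrametrics on $X$ with values in $S$ generating the topology of $X$. $\mathcal{UD}_X^S(d,e)$ is the infimum of all $\epsilon\in S\cup\{\infty\}$ such that for all $x,y$, $d(x,y)\le\max\{e(x,y),\epsilon\}$ and $e(x,y)\le\max\{d(x,y),\epsilon\}$. A metric space $(X,d)$ is uniformly perfect if there is $c\in(0,1)$ such that for every $x\in X$ and every $r\in(0,\delta_d(X))$ ($\delta_d$ = diameter) there is $y$ with $cr\le d(x,y)\le r$. $F_\sigma$: countable union of closed sets. *)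

(* Defs.v *)
From HB Require Import structures.
From mathcomp Require Import all_boot all_order all_algebra.
From mathcomp Require Import all_classical all_reals all_analysis.
Set Implicit Arguments. Unset Strict Implicit. Unset Printing Implicit Defensive.
Import Order.TTheory GRing.Theory Num.Theory.
Import numFieldNormedType.Exports.
Local Open Scope classical_set_scope.
Local Open Scope ring_scope.

Definition range_set (R : realType) (S : set R) : Prop :=
  (forall s, S s -> 0 <= s) /\ S 0.

Definition cantor_set (R : realType) : set R :=
  [set x | exists a : nat -> bool,
     (fun n : nat => \sum_(0 <= k < n) ((2 * (a k : nat))%:R / 3%:R ^+ k.+1 : R))
       @ \oo --> x].

Definition Gamma (R : realType) := {x : R | cantor_set x}.

Definition euclid_open (R : realType) (U : set (Gamma R)) : Prop :=
  forall x, U x -> exists2 del : R, 0 < del &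
    forall y : Gamma R, `|sval y - sval x| < del -> U y.

Definition metric_open (R : realType) (d : Gamma R -> Gamma R -> R)
  (U : set (Gamma R)) : Prop :=
  forall x, U x -> exists2 eps : R, 0 < eps & forall y, d x y < eps -> U y.

Definition is_ultrametric (X : Type) (R : realType) (d : X -> X -> R) : Prop :=
  (forall x y, d x y = 0 <-> x = y) /\
  (forall x y, d x y = d y x) /\
  (forall x y z, d x z <= Num.max (d x y) (d y z)).

Definition Ult (R : realType) (S : set R) : set (Gamma R -> Gamma R -> R) :=
  [set d | is_ultrametric d /\ (forall x y, S (d x y)) /\
           (forall U, euclid_open U <-> metric_open d U)].

Definition UD (X : Type) (R : realType) (S : set R) (d e : X -> X -> R) : \bar R :=
  ereal_inf [set eps : \bar R |
    (eps = +oo%E \/ exists2 s, S s & eps = s%:E) /\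
    forall x y, ((d x y)%:E <= Order.max (e x y)%:E eps)%E /\
                ((e x y)%:E <= Order.max (d x y)%:E eps)%E].

Definition diam (X : Type) (R : realType) (d : X -> X -> R) : \bar R :=
  ereal_sup [set (d p.1 p.2)%:E | p in [set: X * X]].

Definition uniformly_perfect (X : Type) (R : realType) (d : X -> X -> R) : Prop :=
  exists c : R, 0 < c < 1 /\
    forall (x : X) (r : R), 0 < r -> (r%:E < diam d)%E ->
      exists y, c * r <= d x y <= r.

Definition UD_closed_in (X : Type) (R : realType) (S : set R)
  (A F : set (X -> X -> R)) : Prop :=
  F `<=` A /\
  forall d, A d -> (forall eps : R, 0 < eps ->
      exists2 e, F e & (UD S d e < eps%:E)%E) -> F d.

Definition UD_Fsigma_in (X : Type) (R : realType) (S : set R)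
  (A B : set (X -> X -> R)) : Prop :=
  exists F : nat -> set (X -> X -> R),
    (forall n, UD_closed_in S A (F n)) /\ B = \bigcup_n F n.

(* Main.v *)
Require Import Defs.
From mathcomp Require Import all_boot all_order all_algebra.
From mathcomp Require Import all_classical all_reals all_analysis.
From mathcomp Require Import lra.
Import Order.TTheory GRing.Theory Num.Theory.
Local Open Scope classical_set_scope.
Local Open Scope ring_scope.

Lemma UD_agree {R : realType} {S : set R} {X : Type} {d e : X -> X -> R} {eps : R} :
  (UD S d e < eps%:E)%E ->
  exists2 s : R, s < eps &
    forall x y, s < e x y \/ s < d x y -> d x y = e x y.
Proof.
move=> /ereal_inf_lt [z [[->|[s Ss ->]] H]] zlt; first by [].
exists s; first by rewrite lte_fin in zlt.
move=> x y Hxy; have [H1 H2] := H x y.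
rewrite le_max !lee_fin in H1; rewrite le_max !lee_fin in H2.
apply/eqP; rewrite eq_le.
case: Hxy => Hs; case/orP: H1 => H1; case/orP: H2 => H2; rewrite ?H1 ?H2 //=.
all: exfalso; clear H zlt; lra.
Qed.

Definition cn (R : realType) (n : nat) : R := (n.+2%:R)^-1.

Lemma cn_gt0 (R : realType) n : 0 < cn R n.
Proof. by rewrite /cn invr_gt0 ltr0n. Qed.

Lemma cn_lt1 (R : realType) n : cn R n < 1.
Proof. by rewrite /cn invf_lt1 ?ltr0n // ltr1n. Qed.

Definition Fn {R : realType} (S : set R) (n : nat) : set (Gamma R -> Gamma R -> R) :=
  [set d | Ult S d /\ forall (x : Gamma R) (r : R), 0 < r -> (r%:E < diam d)%E ->
      exists y, cn R n * r <= d x y <= r].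

Lemma Fn_closed (R : realType) (S : set R) n : UD_closed_in S (Ult S) (Fn S n).
Proof.
split; first by move=> d [].
move=> d Ud Hlim; split => // x r r0 rd.
have cr0 : 0 < cn R n * r by rewrite mulr_gt0 ?cn_gt0.
have [e [Ue He] Hde] := Hlim _ cr0.
have [s slt Hag] := UD_agree Hde.
have sr : s < r.
  apply: (lt_le_trans slt); apply: ler_piMl; [exact: ltW | exact: ltW (cn_lt1 R n)].
have re : (r%:E < diam e)%E.
  have [z [p _ <-] rz] := ereal_sup_gt rd.
  rewrite lte_fin in rz.
  have dp : d p.1 p.2 = e p.1 p.2 by apply: Hag; right; exact: lt_trans rz.
  apply: (lt_le_trans (y := (e p.1 p.2)%:E)); first by rewrite lte_fin -dp.
  by apply: ereal_sup_ubound; exists p.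
have [y /andP [H1 H2]] := He x r r0 re.
exists y; have -> : d x y = e x y by apply: Hag; left; exact: lt_le_trans H1.
by rewrite H1 H2.
Qed.

Theorem lemma4p2 (R : realType) (S : set R) :
  range_set S ->
  UD_Fsigma_in S (Ult S) [set d | Ult S d /\ uniformly_perfect d].
Proof.
move=> _; exists (Fn S); split; first exact: Fn_closed.
apply/seteqP; split => d /=.
- move=> [Ud [c [/andP [c0 c1] Hc]]].
  exists (Num.truncn c^-1) => //; split => // x r r0 rd.
  have [y /andP [H1 H2]] := Hc x r r0 rd.
  exists y; rewrite H2 andbT; apply: le_trans H1; rewrite ler_pM2r //.
  rewrite /cn -[c]invrK lef_pV2 ?posrE ?invr_gt0 ?ltr0n //.
  apply: ltW; apply: (lt_trans (truncnS_gt _)); by rewrite !invrK ltr_nat.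
- move=> [n _ [Ud Hn]]; split => //; exists (cn R n); split.
    by rewrite cn_gt0 cn_lt1.
  exact: Hn.
Qed.
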